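(* Let $A,B$ be commuting nilpotent $n\times n$ matrices with $\mathrm{sh}(B)=(\lambda_1,\lambda_2)$, $\lambda_1\ge\lambda_2\ge1$, and $\mathrm{sh}(A)=(\mu_1,\ldots,\mu_s)$. If $s>\lambda_1$, then $\mu_1\le\left\lceil\frac{\lambda_2}{s-\lambda_1}\right\rceil$.
   Context: $\mathbb{F}$ is an algebraically closed field of characteristic $0$ and matrices are over $\mathbb{F}$. For a nilpotent matrix $A$, $\mathrm{sh}(A)$ is the partition of $n$ given by the sizes of the Jordan blocks of its Jordan canonical form (so $s$ is the number of Jordan blocks of $A$ and $\mu_1$ its nilpotency index). *)

(* Defs.v *)
From HB Require Import structures.
From mathcomp Require Import all_boot all_order all_algebra.
Set Implicit Arguments. Unset Strict Implicit. Unset Printing Implicit Defensive.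
Import GRing.Theory.
Local Open Scope ring_scope.

Definition is_partition (p : seq nat) (n : nat) : bool :=
  [&& sorted geq p, all (fun x => 0 < x)%N p & sumn p == n].

(* Positions (0-based) at which a new Jordan block starts, except 0:
   the partial sums mu_1, mu_1+mu_2, ... *)
Definition block_ends (p : seq nat) : seq nat :=
  [seq sumn (take m p) | m <- iota 1 (size p)].

(* The nilpotent Jordan matrix J_{p_1} (+) J_{p_2} (+) ... (ones on the
   superdiagonal inside each block). *)
Definition nilJordan (F : nzRingType) (n : nat) (p : seq nat) : 'M[F]_n :=
  \matrix_(i < n, j < n)
    (if (nat_of_ord j == (nat_of_ord i).+1) && ((nat_of_ord i).+1 \notin block_ends p)
     then 1 else 0).

Definition sh_is (F : fieldType) (n : nat) (A : 'M[F]_n) (p : seq nat) : Prop :=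
  is_partition p n /\
  exists P : 'M[F]_n, P \in unitmx /\ P *m A *m invmx P = nilJordan F n p.

(* Main.v *)
Require Import Defs.
From HB Require Import structures.
From mathcomp Require Import all_boot all_order all_algebra.
From mathcomp Require Import zify.
Import GRing.Theory.
Set Implicit Arguments. Unset Strict Implicit.
Section Comb.
Variable h : nat -> nat.
Hypothesis hdec : forall i, h i.+1 <= h i.
Hypothesis hconv : forall i, h i.+1 - h i.+2 <= h i - h i.+1.

Lemma hmono i k : i <= k -> h k <= h i.
Proof. move=> /subnK <-; elim: (k - i) => [|t IH] //=. by rewrite addSn; apply: leq_trans (hdec _) IH. Qed.

Lemma dmono i j : i <= j -> h j - h j.+1 <= h i - h i.+1.
Proof. move=> /subnK <-; elim: (j - i) => [|t IH] //=. by rewrite addSn; apply: leq_trans (hconv _) IH. Qed.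

Lemma tele_up c i k : i <= k -> (forall j, i <= j < k -> h j - h j.+1 <= c) -> h i - h k <= c * (k - i).
Proof.
move=> /subnK <-; elim: (k - i) => [|t IH] H; first by rewrite add0n subnn; lia.
have H1 := H (t + i). have H2 := hdec (t+i). have H3 := hmono (leq_addl t i).
have IH' := IH (fun j hj => H j ltac:(move: hj => /andP[a b]; rewrite a /=; lia)).
move: H1; rewrite leq_addl /= addSn => /(_ (leqnn _)) => H1. rewrite addnK in IH'; rewrite subSn ?leq_addl // addnK mulnS. lia.
Qed.

Lemma tele_lo c i k : i <= k -> (forall j, i <= j < k -> c <= h j - h j.+1) -> c * (k - i) <= h i - h k.
Proof.
move=> /subnK <-; elim: (k - i) => [|t IH] H; first by rewrite add0n subnn; lia.
have H1 := H (t + i). have H2 := hdec (t+i). have H3 := hmono (leq_addl t i).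
have IH' := IH (fun j hj => H j ltac:(move: hj => /andP[a b]; rewrite a /=; lia)).
move: H1; rewrite leq_addl /= addSn => /(_ (leqnn _)) => H1. rewrite addnK in IH'; rewrite subSn ?leq_addl // addnK mulnS. lia.
Qed.

Lemma comb1 a d : (forall i, h i - h i.+1 <= 2) -> h a = 0 -> a + d <= h 0 -> 2 * d <= h 0 - h d.
Proof.
move=> H2 ha hd.
have Hge : forall i, i < d -> 2 <= h i - h i.+1.
  move=> i lid; rewrite leqNgt; apply/negP => hi.
  have A1 : h 0 - h i <= 2 * (i - 0) by apply: tele_up => // j _; exact: H2.
  case: (leqP i a) => ia.
    have A2 : h i - h a <= 1 * (a - i).
      apply: tele_up => // j /andP[ij _]; have := dmono ij; lia.
    have := hmono ia; have := hmono (leq0n i). lia.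
  have : h 0 - h a <= 2 * (a - 0) by apply: tele_up => // j _; exact: H2.
  lia.
have := tele_lo (leq0n d) (fun j hj => Hge j ltac:(lia)). lia.
Qed.

Lemma comb3 N d : h N = 0 -> 0 < h d -> d <= h 0 - h d.
Proof.
move=> hN hd.
have Hge : forall i, i < d -> 1 <= h i - h i.+1.
  move=> i lid; rewrite leqNgt; apply/negP => hi.
  have A : h i - h (maxn d N) <= 0 * (maxn d N - i).
    apply: tele_up; first lia. move=> j /andP[ij _]; have := dmono ij; lia.
  have B : h (maxn d N) <= h N by apply: hmono; lia.
  have C : h (maxn d N) <= h d by apply: hmono; lia.
  have D : h d <= h i by apply: hmono; lia.
  lia.
have := tele_lo (leq0n d) (fun j hj => Hge j ltac:(lia)). lia.
Qed.
End Comb.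

Section Abs.
Local Open Scope ring_scope.
Variable F : fieldType.
Variable n : nat.

Lemma expSr_mx (B : 'M[F]_n) i : B ^+ i.+1 = B ^+ i *m B.
Proof. by rewrite exprSr mulmxE. Qed.
Lemma expS_mx (B : 'M[F]_n) i : B ^+ i.+1 = B *m B ^+ i.
Proof. by rewrite exprS mulmxE. Qed.

Lemma hrel k (W : 'M[F]_(k, n)) (B : 'M[F]_n) i :
  (\rank (W *m B ^+ i.+1) + \rank (W *m B ^+ i :&: kermx B))%N = \rank (W *m B ^+ i).
Proof. by rewrite expSr_mx mulmxA mxrank_mul_ker. Qed.

Lemma hsub k (W : 'M[F]_(k, n)) (B : 'M[F]_n) i :
  (W *m B <= W)%MS -> (W *m B ^+ i.+1 <= W *m B ^+ i)%MS.
Proof. by move=> sW; rewrite expS_mx mulmxA submxMr. Qed.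

Lemma hdec k (W : 'M[F]_(k, n)) (B : 'M[F]_n) i :
  (\rank (W *m B ^+ i.+1) <= \rank (W *m B ^+ i))%N.
Proof. by rewrite -(hrel W B i) leq_addr. Qed.

Lemma hconv k (W : 'M[F]_(k, n)) (B : 'M[F]_n) i : (W *m B <= W)%MS ->
  (\rank (W *m B ^+ i.+1) - \rank (W *m B ^+ i.+2) <= \rank (W *m B ^+ i) - \rank (W *m B ^+ i.+1))%N.
Proof.
move=> sW; rewrite -{1}(hrel W B i.+1) -{1}(hrel W B i) !addKn.
by apply: mxrankS; apply: capmxS => //; apply: hsub.
Qed.

Lemma hker k (W : 'M[F]_(k, n)) (B : 'M[F]_n) i :
  (\rank (W *m B ^+ i) - \rank (W *m B ^+ i.+1) <= \rank (kermx B))%N.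
Proof. by rewrite -{1}(hrel W B i) addKn mxrankS // capmxSr. Qed.

Lemma mulmx1' m (W : 'M[F]_(m, n)) (B : 'M[F]_n) : W *m B ^+ 0 = W.
Proof. by rewrite expr0 mulmx1. Qed.

Lemma abstract (A B : 'M[F]_n) a b s m :
  A *m B = B *m A -> B ^+ a = 0 -> (\rank (kermx B) <= 2)%N -> n = (a + b)%N ->
  (s <= \rank (kermx A))%N -> (a < s)%N -> (0 < m)%N -> A ^+ m.-1 != 0 ->
  (m.-1 * (s - a) <= b - 1)%N.
Proof.
move=> hc hBa hkB hn hs has hm hAm.
set d := (s - a)%N. have dE : d = (s - a)%N by [].
set K := kermx A.
have sK : (K *m B <= K)%MS.
  by apply/sub_kermxP; rewrite -mulmxA -hc mulmxA mulmx_ker mul0mx.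
have hKa : \rank (K *m B ^+ a) = 0%N by rewrite hBa mulmx0 mxrank0.
have rK : \rank K = (n - \rank A)%N by rewrite mxrank_ker.
have rAn : (\rank A <= n)%N by apply: rank_leq_col.
have c1 := @comb1 (fun i => \rank (K *m B ^+ i)) (hdec K B) (fun i => hconv i sK) a d
   (fun i => leq_trans (hker K B i) hkB) hKa.
rewrite /= mulmx1' in c1.
have c1' := c1 ltac:(by rewrite dE subnKC // ltnW).
have capK : \rank (K :&: kermx (B ^+ d)) = (\rank K - \rank (K *m B ^+ d))%N.
  by rewrite -(mxrank_mul_ker K (B ^+ d)) addKn.
have kerBd : (\rank (kermx (B ^+ d)) <= 2 * d)%N.
  have sI : ((1%:M : 'M[F]_n) *m B <= 1%:M)%MS by apply: submx1.
  have t := @tele_up (fun i => \rank ((1%:M : 'M[F]_n) *m B ^+ i)) (hdec _ B) 2 0 d (leq0n d)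
     (fun j _ => leq_trans (hker _ B j) hkB).
  rewrite /= !mul1mx expr0 mxrank1 subn0 in t.
  by rewrite mxrank_ker.
have Hsub : (kermx (B ^+ d) <= K)%MS.
  have le : (K :&: kermx (B ^+ d) <= kermx (B ^+ d))%MS by apply: capmxSr.
  have [_ E] := mxrank_leqif_sup le.
  have h : (kermx (B ^+ d) <= K :&: kermx (B ^+ d))%MS.
    rewrite -E eqn_leq mxrankS //=. move: capK kerBd c1'. lia.
  apply: submx_trans h _; apply: capmxSl.
have hcBA : GRing.comm B A by rewrite /GRing.comm -!mulmxE hc.
have step : forall j, A ^+ j.+1 != 0 -> (d + \rank (A ^+ j.+1) <= \rank (A ^+ j))%N.
  move=> j hj.
  have sU : (A ^+ j *m B <= A ^+ j)%MS.
    have := commrX j hcBA; rewrite /GRing.comm -!mulmxE => <-; apply: submxMl.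
  have e1 := mxrank_mul_ker (A ^+ j) A. rewrite -expSr_mx -/K in e1.
  have e2 := mxrank_mul_ker (A ^+ j) (B ^+ d).
  have e3 : (\rank (A ^+ j :&: kermx (B ^+ d)) <= \rank (A ^+ j :&: K))%N.
    by apply: mxrankS; apply: capmxS.
  have hUd : (0 < \rank (A ^+ j *m B ^+ d))%N.
    rewrite lt0n mxrank_eq0; apply/negP => /eqP h0.
    have : (A ^+ j <= K)%MS by apply: submx_trans Hsub; apply/sub_kermxP.
    move/sub_kermxP; rewrite -expSr_mx => h1; by rewrite h1 eqxx in hj.
  have c3 := @comb3 (fun i => \rank (A ^+ j *m B ^+ i)) (hdec _ B) (fun i => hconv i sU) a d
     ltac:(by rewrite /= hBa mulmx0 mxrank0) hUd.
  rewrite /= mulmx1' in c3.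
  lia.
have ind : forall j, (0 < j)%N -> (j <= m.-1)%N -> (\rank (A ^+ j) + j * d <= b)%N.
  elim=> [//|j IH] _ hj.
  case: j IH hj => [|j] IH hj.
    rewrite expr1 mul1n. rewrite rK in hs. lia.
  have nz : A ^+ j.+2 != 0.
    apply: contraNneq hAm => h0.
    by rewrite -(subnK hj) exprD h0 mulr0.
  have := step _ nz. have := IH isT ltac:(lia). rewrite mulSn. lia.
move: ind; case: m hm hAm => [//|[|m]] _ hAm /= ind; first by rewrite mul0n.
have := ind m.+1 isT (leqnn _).
have : (0 < \rank (A ^+ m.+1))%N by rewrite lt0n mxrank_eq0.
lia.
Qed.
End Abs.


Section Jor.
Local Open Scope ring_scope.
Variable F : fieldType.
Variable n : nat.
Variable p : seq nat.
Local Notation E := (block_ends p).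
Local Notation J := (nilJordan F n p).

Definition ev (k : nat) : 'rV[F]_n := \row_j ((j : nat) == k)%:R.

Lemma evJ_entry k j : (ev k *m J) 0 j = (((j : nat) == k.+1) && (k.+1 \notin E))%:R.
Proof.
rewrite !mxE.
case: (ltnP k n) => hk.
  rewrite (bigD1 (Ordinal hk)) //= big1 => [|i hi].
    by rewrite !mxE eqxx mul1r addr0 /=; case: (_ && _).
  rewrite !mxE; case: eqP => [e|_]; last by rewrite mul0r.
  by move: hi; rewrite -val_eqE /= e eqxx.
rewrite big1 => [|i _]; last first.
  by rewrite !mxE; case: eqP => [e|_]; [move: (ltn_ord i); rewrite e ltnNge hk | rewrite mul0r].
case: eqP => [e|] //=; move: (ltn_ord j); rewrite e ltnNge; by rewrite (leq_trans hk).
Qed.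

Lemma evJ k : ev k *m J = if k.+1 \notin E then ev k.+1 else 0.
Proof.
apply/rowP => j; rewrite evJ_entry.
by case: ifP => h; rewrite !mxE ?andbT ?andbF.
Qed.

Lemma expS_mx' (B : 'M[F]_n) i : B ^+ i.+1 = B *m B ^+ i.
Proof. by rewrite exprS mulmxE. Qed.

Lemma evJP1 t k : (forall u, (k < u <= k + t)%N -> u \notin E) -> ev k *m J ^+ t = ev (k + t).
Proof.
elim: t k => [|t IH] k H; first by rewrite expr0 mulmx1 addn0.
rewrite expS_mx' mulmxA evJ (H k.+1) ?leqnn ?addnS ?ltnS ?leq_addr //.
rewrite IH -?addSnnS // => u /andP[a b]; apply: H; rewrite (ltnW a) /=; lia.
Qed.

Lemma evJP2 t k u : u \in E -> (k < u <= k + t)%N -> ev k *m J ^+ t = 0.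
Proof.
move=> uE; elim: t k => [|t IH] k H; first by exfalso; lia.
rewrite expS_mx' mulmxA evJ; case: ifP => h; last by rewrite mul0mx.
apply: IH; have : u != k.+1 by apply: contraNneq h => <-.
move: H; lia.
Qed.

Lemma row_ev (M : 'M[F]_n) (i : 'I_n) : row i M = ev i *m M.
Proof.
rewrite rowE; congr (_ *m _); apply/rowP => j; rewrite !mxE /=.
by [].
Qed.

Definition Cdiag (P : pred nat) : 'M[F]_n := diag_mx (\row_(i < n) (nat_of_bool (P (i : nat)))%:R).

Lemma rank_sum_le m k (M : 'I_n -> 'M[F]_(m, k)) :
  (\rank (\sum_(i < n) M i)%R <= \sum_(i < n) \rank (M i))%N.
Proof.
elim/big_ind2: _ => [|x1 x2 y1 y2 h1 h2|//]; first by rewrite mxrank0.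
by apply: leq_trans (mxrank_add _ _) (leq_add h1 h2).
Qed.

Lemma rank_Cdiag (P : pred nat) : (\rank (Cdiag P) <= \sum_(i < n) nat_of_bool (P i))%N.
Proof.
rewrite /Cdiag diag_mx_sum_delta; apply: leq_trans (rank_sum_le _) _.
apply: leq_sum => i _; rewrite mxE; case: (P i) => /=.
  by apply: leq_trans (mxrank_scale _ _) _; rewrite mxrank_delta.
by rewrite scale0r mxrank0.
Qed.

Lemma Cdiag_sum (P : pred nat) : Cdiag P + Cdiag (predC P) = 1%:M.
Proof.
apply/matrixP => i j; rewrite !mxE /=.
by case: (P i); case: (i == j); rewrite /= ?mulr1n ?mulr0n ?addr0 ?add0r.
Qed.

Lemma rank_Cdiag_ge (P : pred nat) : (n - \sum_(i < n) nat_of_bool (~~ P i) <= \rank (Cdiag P))%N.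
Proof.
have h := mxrank_add (Cdiag P) (Cdiag (predC P)).
rewrite Cdiag_sum mxrank1 in h.
have h2 := rank_Cdiag (predC P). apply: leq_trans (leq_sub2l _ h2) _; by rewrite leq_subLR addnC.
Qed.

Lemma J_eq : J = Cdiag (fun i => i.+1 \notin E) *m J.
Proof.
apply/matrixP => i j; rewrite mul_diag_mx !mxE.
by case: (_.+1 \in E); rewrite /= ?andbF ?mul1r ?mul0r.
Qed.

Lemma JJt : n \in E -> J *m J^T = Cdiag (fun i => i.+1 \notin E).
Proof.
move=> nE; apply/matrixP => i k; rewrite !mxE.
case: (ltnP i.+1 n) => hi.
  rewrite (bigD1 (Ordinal hi)) //= big1 => [|j hj].
    rewrite !mxE /= eqxx /=.
    case iE: (i.+1 \in E); rewrite /= ?mul0r ?mul1r ?mul0rn ?addr0 //.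
    case: (eqVneq i k) => [<-|ne]; first by rewrite eqxx iE.
    have : (i.+1 == k.+1 :> nat) = false.
      by apply/negP => /eqP [] /val_inj/eqP; rewrite (negPf ne).
    by move=> ->; rewrite andFb.
  rewrite !mxE; case: eqP => [e|_]; last by rewrite mul0r.
  by move: hj; rewrite -val_eqE /= e eqxx.
have iE : i.+1 = n by apply/eqP; rewrite eqn_leq hi ltn_ord.
rewrite big1 => [|j _]; last first.
  rewrite !mxE; case: eqP => [e|_]; last by rewrite mul0r.
  by move: (ltn_ord j); rewrite e iE ltnn.
by rewrite iE nE /= ?mulr0n ?mul0rn.
Qed.

Lemma sum_count (P : pred nat) : (\sum_(i < n) nat_of_bool (P i))%N = count P (iota 0 n).
Proof.
rewrite -(big_mkord xpredT (fun i => nat_of_bool (P i))) /index_iota subn0.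
rewrite -sum1_count [RHS]big_mkcond /=; apply: eq_bigr => i _; by case: (P i).
Qed.

Lemma count_shift : count (fun i => i.+1 \in E) (iota 0 n) = count (mem E) (iota 1 n).
Proof. by rewrite (iotaDl 1 0) count_map. Qed.
End Jor.


Lemma be_size p : size (block_ends p) = size p.
Proof. by rewrite /block_ends size_map size_iota. Qed.

Lemma be_mem p u : u \in block_ends p -> exists2 k, (0 < k <= size p)%N & u = sumn (take k p).
Proof.
case/mapP => k; rewrite mem_iota => /andP[a b] ->; exists k => //; rewrite a /=; lia.
Qed.

Lemma be_ge p u : u \in block_ends p -> (head 0%N p <= u)%N.
Proof.
case/be_mem => [[|k]] //= _ ->; case: p => //= x p'; exact: leq_addr.
Qed.

Lemma be_le p u : u \in block_ends p -> (u <= sumn p)%N.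
Proof.
case/be_mem => k _ ->; rewrite -{2}(cat_take_drop k p) sumn_cat; exact: leq_addr.
Qed.

Lemma be_uniq p : all (fun x => 0 < x)%N p -> uniq (block_ends p).
Proof.
move=> hp; rewrite /block_ends map_inj_in_uniq ?iota_uniq //.
have key : forall k1 k2, (k1 < k2 <= size p)%N -> (sumn (take k1 p) < sumn (take k2 p))%N.
  move=> k1 k2 /andP[h12 h2].
  rewrite -(subnKC (ltnW h12)) takeD sumn_cat -[X in (X < _)%N]addn0 ltn_add2l.
  have : (0 < size (drop k1 p))%N by rewrite size_drop; lia.
  case e: (drop k1 p) => [|y r] //= _.
  have : y \in p by rewrite -(cat_take_drop k1 p) mem_cat e mem_head orbT.
  move/(allP hp) => y0.
  case: (k2 - k1)%N (subn_gt0 k1 k2) h12 => [|t]; first by move=> ->.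
  by move=> _ _ /=; lia.
move=> k1 k2; rewrite !mem_iota => /andP[_ h1] /andP[_ h2] e.
case: (ltngtP k1 k2) => // h.
  by have := key k1 k2 ltac:(rewrite h /=; lia); rewrite e ltnn.
by have := key k2 k1 ltac:(rewrite h /=; lia); rewrite e ltnn.
Qed.

Lemma be2 a b : block_ends [:: a; b] = [:: a; (a + b)%N].
Proof. by rewrite /block_ends /= !addn0. Qed.

Lemma cnt_le (E : seq nat) n : (count (mem E) (iota 1 n) <= size E)%N.
Proof.
rewrite -size_filter; apply: uniq_leq_size; first by rewrite filter_uniq ?iota_uniq.
by move=> x; rewrite mem_filter => /andP[].
Qed.

Lemma cnt_ge (E : seq nat) n : uniq E -> (forall u, u \in E -> 0 < u <= n)%N ->
  (size E <= count (mem E) (iota 1 n))%N.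
Proof.
move=> uE hE; rewrite -size_filter; apply: uniq_leq_size => // x xE.
rewrite mem_filter mem_iota; have := hE x xE; have -> : (mem E) x by []. lia.
Qed.


Section Transfer.
Local Open Scope ring_scope.
Variable F : fieldType.
Variable n : nat.

Lemma conj_pow (Q M : 'M[F]_n) k : Q \in unitmx ->
  (Q *m M *m invmx Q) ^+ k = Q *m M ^+ k *m invmx Q.
Proof.
move=> uQ; elim: k => [|k IH].
  by rewrite !expr0 mulmx1 mulmxV.
rewrite expS_mx IH expS_mx !mulmxA -(mulmxA _ (invmx Q) Q) mulVmx // mulmx1. exact: erefl.
Qed.

Lemma unconj (Q X : 'M[F]_n) : Q \in unitmx -> invmx Q *m (Q *m X *m invmx Q) *m Q = X.
Proof.
move=> uQ; by rewrite !mulmxA mulVmx // mul1mx -mulmxA mulVmx // mulmx1.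
Qed.

Lemma rank_conj (Q X : 'M[F]_n) : Q \in unitmx -> \rank (Q *m X *m invmx Q) = \rank X.
Proof.
move=> uQ; rewrite mxrankMfree ?row_free_unit ?unitmx_inv //.
apply/eqP; rewrite eqn_leq mxrankM_maxr /=.
by rewrite -{1}(mul1mx X) -(mulVmx uQ) -mulmxA mxrankM_maxr.
Qed.
End Transfer.

Theorem proposition3p8 (F : closedFieldType) (hchar : ([pchar F]%R) =i pred0)
  (n : nat) (A B : 'M[F]_n) (l1 l2 : nat) (mu : seq nat)
  (hcomm : (A *m B = B *m A)%R)
  (hB : sh_is B [:: l1; l2]) (hl : (1 <= l2 <= l1)%N)
  (hA : sh_is A mu)
  (hs : (size mu > l1)%N) :
  (head 0%N mu <= (l2 + (size mu - l1) - 1) %/ (size mu - l1))%N.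
Proof.
move: hA hB => [pA [P [uP eA]]] [pB [Q [uQ eB]]].
have hn : n = (l1 + l2)%N.
  by move: pB => /and3P[_ _ /eqP]; rewrite /= addn0.
move: pA => /and3P[_ posA /eqP sA].
have mu0 : mu != [::] by move: hs; case: (mu).
have hm : (0 < head 0%N mu)%N.
  by move: mu0 posA; case: (mu) => //= x r _ /andP[].
have mn : (head 0%N mu <= n)%N.
  rewrite -sA; case: (mu) => //= x r; exact: leq_addr.
set m := head 0%N mu.
set d := (size mu - l1)%N.
have d0 : (0 < d)%N by rewrite /d subn_gt0.
suff H : (m.-1 * d <= l2 - 1)%N.
  rewrite leq_divRL //. move: H; case: (m) hm => // m' _ /=. nia.
apply: (@abstract F n A B l1 l2 (size mu) m) => //.
-
  have JB : (nilJordan F n [:: l1; l2] ^+ l1 = 0)%R.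
    apply/row_matrixP => i; rewrite row0 row_ev.
    apply: (@evJP2 F n [:: l1; l2] l1 i (if (i < l1)%N then l1 else (l1 + l2)%N)).
      by rewrite be2; case: ifP; rewrite !inE eqxx ?orbT.
    have := ltn_ord i; case: ifP => /= h; lia.
  have := conj_pow B l1 uQ; rewrite eB JB => /esym h.
  by rewrite -(unconj (B ^+ l1)%R uQ) h mulmx0 mul0mx.
-
  rewrite mxrank_ker -(rank_conj B uQ) eB.
  set J := nilJordan F n [:: l1; l2].
  have nE : n \in block_ends [:: l1; l2] by rewrite be2 hn !inE eqxx orbT.
  have h1 := mxrankM_maxl J J^T; rewrite JJt // in h1.
  have h2 := rank_Cdiag_ge F n (fun i => i.+1 \notin block_ends [:: l1; l2]).
  rewrite (sum_count n (fun i => ~~ (i.+1 \notin block_ends [:: l1; l2]))) in h2.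
  have h3 : count (fun i => ~~ (i.+1 \notin block_ends [:: l1; l2])) (iota 0 n) <= 2.
    rewrite (eq_count (a2 := fun i => i.+1 \in block_ends [:: l1; l2])); last by move=> i /=; rewrite negbK.
    rewrite count_shift; apply: leq_trans (cnt_le _ _) _; by rewrite be_size.
  lia.
-
  rewrite mxrank_ker -(rank_conj A uP) eA.
  set E := block_ends mu.
  have h1 := mxrankM_maxl (Cdiag F n (fun i => i.+1 \notin E)) (nilJordan F n mu).
  rewrite -J_eq in h1.
  have h2 := rank_Cdiag F n (fun i => i.+1 \notin E).
  rewrite (sum_count n (fun i => i.+1 \notin E)) in h2.
  have h3 := count_predC (fun i => i.+1 \in E) (iota 0 n).
  rewrite size_iota count_shift in h3.
  have h4 : (size E <= count (mem E) (iota 1 n))%N.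
    apply: cnt_ge; first exact: be_uniq.
    move=> u uE; rewrite (leq_trans hm (be_ge uE)) /= -sA; exact: be_le.
  have e : count (predC (fun i => i.+1 \in E)) (iota 0 n) = count (fun i => i.+1 \notin E) (iota 0 n) by [].
  rewrite be_size in h4.
  rewrite -/E in h3. lia.
-
  apply/negP => /eqP h0.
  have := conj_pow A m.-1 uP; rewrite eA h0 mulmx0 mul0mx => hJ.
  have e := @evJP1 F n mu m.-1 0 (fun u hu => ltac:(apply/negP => uE; have := be_ge uE; rewrite -/m; lia)).
  rewrite hJ mulmx0 add0n in e.
  have hk : (m.-1 < n)%N by lia.
  have := congr1 (fun M : 'rV[F]_n => M ord0 (Ordinal hk)) e.
  rewrite !mxE /= eqxx => /eqP; by rewrite eq_sym oner_eq0.
Qed.
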